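(* Let $n\ge p\ge1$, $\lambda>0$, $0<\varepsilon<\frac34$, and let $f:\mathbb{R}^{n\times p}\to\mathbb{R}$ be twice continuously differentiable. Let $\mathrm{St}(p,n)^\varepsilon=\{X:\|X^\top X-I_p\|\le\varepsilon\}$, let $L>0$ be such that $\nabla f$ is $L$-Lipschitz on $\mathrm{St}(p,n)^\varepsilon$, $L'=\max_{X\in\mathrm{St}(p,n)^\varepsilon}\|\nabla f(X)\|$, $\hat L=\max(L,L')$, $s=\sup_{X\in\mathrm{St}(p,n)^\varepsilon}\|\mathrm{sym}(X^\top\nabla f(X))\|$, let $\mu\ge\frac{2}{3-4\varepsilon}\left(L(1-\varepsilon)+3s+\hat L^2\frac{(1+\varepsilon)^2}{\lambda(1-\varepsilon)}\right)$, $\nu=\lambda\mu$, and $\mathcal{L}(X)=f(X)-\frac12\langle\mathrm{sym}(X^\top\nabla f(X)),X^\top X-I_p\rangle+\mu\mathcal{N}(X)$. Let $\rho=\min\left(\frac12,\frac{\nu}{4\lambda^2(1+\varepsilon)}\right)$. Then for all $X\in\mathrm{St}(p,n)^\varepsilon$, $$\langle\Lambda(X),\nabla\mathcal{L}(X)\rangle\ge\rho\|\Lambda(X)\|^2.$$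
   Context: $\|\cdot\|$ and $\langle\cdot,\cdot\rangle$ are the Frobenius norm and inner product. $\mathrm{sym}(M)=\frac12(M+M^\top)$, $\mathrm{skew}(M)=\frac12(M-M^\top)$. $\mathcal{N}(X)=\frac14\|X^\top X-I_p\|^2$. $\mathrm{grad}f(X)=\mathrm{skew}(\nabla f(X)X^\top)X$ for all $X$, and $\Lambda(X)=\mathrm{grad}f(X)+\lambda X(X^\top X-I_p)$. *)

(* Defs.v *)
From HB Require Import structures.
From mathcomp Require Import all_boot all_order all_algebra.
From mathcomp Require Import all_classical all_reals all_analysis.
Set Implicit Arguments. Unset Strict Implicit. Unset Printing Implicit Defensive.
Import Order.TTheory GRing.Theory Num.Theory.
Import numFieldNormedType.Exports.
Local Open Scope ring_scope.

Section Defs.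
Variable R : realType.

Definition frob {m k : nat} (A B : 'M[R]_(m, k)) : R :=
  \sum_(i < m) \sum_(j < k) A i j * B i j.
Definition fnorm {m k : nat} (A : 'M[R]_(m, k)) : R := Num.sqrt (frob A A).

Definition msym {m : nat} (M : 'M[R]_m) : 'M[R]_m := 2^-1 *: (M + M^T).
Definition mskew {m : nat} (M : 'M[R]_m) : 'M[R]_m := 2^-1 *: (M - M^T).

Definition Npen {n p : nat} (X : 'M[R]_(n, p)) : R :=
  4^-1 * fnorm (X^T *m X - 1%:M) ^+ 2.

Definition StEps {n p : nat} (eps : R) (X : 'M[R]_(n, p)) : Prop :=
  fnorm (X^T *m X - 1%:M) <= eps.

Definition is_grad {n p : nat} (F : 'M[R]_(n, p) -> R)
  (G : 'M[R]_(n, p) -> 'M[R]_(n, p)) : Prop :=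
  forall X, differentiable F X /\ forall H, 'D_H F X = frob (G X) H.

Definition rgrad {n p : nat} (G : 'M[R]_(n, p) -> 'M[R]_(n, p))
  (X : 'M[R]_(n, p)) : 'M[R]_(n, p) :=
  mskew (G X *m X^T) *m X.

Definition LambdaF {n p : nat} (G : 'M[R]_(n, p) -> 'M[R]_(n, p)) (lam : R)
  (X : 'M[R]_(n, p)) : 'M[R]_(n, p) :=
  rgrad G X + lam *: (X *m (X^T *m X - 1%:M)).

Definition calL {n p : nat} (f : 'M[R]_(n, p) -> R)
  (G : 'M[R]_(n, p) -> 'M[R]_(n, p)) (mu : R) (X : 'M[R]_(n, p)) : R :=
  f X - 2^-1 * frob (msym (X^T *m G X)) (X^T *m X - 1%:M) + mu * Npen X.

End Defs.

(* Main.v *)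
Require Import Defs.
From HB Require Import structures.
From mathcomp Require Import all_boot all_order all_algebra.
From mathcomp Require Import all_classical all_reals all_analysis.
From mathcomp Require Import ring lra.
Import Order.TTheory GRing.Theory Num.Theory.
Import numFieldNormedType.Exports.
Local Open Scope ring_scope.
Set Implicit Arguments. Unset Strict Implicit. Unset Printing Implicit Defensive.


Local Open Scope ring_scope.
Section FrobA.
Variable R : realType.

Lemma msq_ge0 (x : R) : 0 <= x * x.
Proof. by rewrite -expr2 sqr_ge0. Qed.

Lemma frobE m k (A B : 'M[R]_(m, k)) : frob A B = \tr (A^T *m B).
Proof.
rewrite /frob /mxtrace exchange_big /=; apply: eq_bigr => j _.
by rewrite !mxE; apply: eq_bigr => i _; rewrite !mxE.
Qed.

Lemma frobC m k (A B : 'M[R]_(m, k)) : frob A B = frob B A.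
Proof. by rewrite /frob; apply: eq_bigr => i _; apply: eq_bigr => j _; rewrite mulrC. Qed.

Lemma frobDl m k (A B C : 'M[R]_(m, k)) : frob (A + B) C = frob A C + frob B C.
Proof.
rewrite /frob -big_split /=; apply: eq_bigr => i _.
rewrite -big_split /=; apply: eq_bigr => j _; by rewrite mxE mulrDl.
Qed.

Lemma frobZl m k a (A C : 'M[R]_(m, k)) : frob (a *: A) C = a * frob A C.
Proof.
rewrite /frob mulr_sumr; apply: eq_bigr => i _.
rewrite mulr_sumr; apply: eq_bigr => j _; by rewrite mxE mulrA.
Qed.

Lemma frobNl m k (A C : 'M[R]_(m, k)) : frob (- A) C = - frob A C.
Proof. by rewrite -scaleN1r frobZl mulN1r. Qed.

Lemma frobBl m k (A B C : 'M[R]_(m, k)) : frob (A - B) C = frob A C - frob B C.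
Proof. by rewrite frobDl frobNl. Qed.

Lemma frobDr m k (A B C : 'M[R]_(m, k)) : frob C (A + B) = frob C A + frob C B.
Proof. by rewrite frobC frobDl !(frobC C). Qed.
Lemma frobZr m k a (A C : 'M[R]_(m, k)) : frob C (a *: A) = a * frob C A.
Proof. by rewrite frobC frobZl frobC. Qed.
Lemma frobNr m k (A C : 'M[R]_(m, k)) : frob C (- A) = - frob C A.
Proof. by rewrite frobC frobNl frobC. Qed.
Lemma frobBr m k (A B C : 'M[R]_(m, k)) : frob C (A - B) = frob C A - frob C B.
Proof. by rewrite frobDr frobNr. Qed.
Lemma frob0l m k (C : 'M[R]_(m, k)) : frob 0 C = 0.
Proof. by rewrite -(scale0r (0 : 'M[R]_(m,k))) frobZl mul0r. Qed.
Lemma frob0r m k (C : 'M[R]_(m, k)) : frob C 0 = 0.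
Proof. by rewrite frobC frob0l. Qed.

Lemma frob_tr m k (A B : 'M[R]_(m, k)) : frob A^T B^T = frob A B.
Proof. by rewrite !frobE trmxK -mxtrace_tr trmx_mul trmxK mxtrace_mulC. Qed.

Lemma frob_mull m k l (A : 'M[R]_(m, k)) (B : 'M[R]_(k, l)) C :
  frob (A *m B) C = frob B (A^T *m C).
Proof. by rewrite !frobE trmx_mul mulmxA. Qed.

Lemma frob_mulr m k l (A : 'M[R]_(m, k)) (B : 'M[R]_(k, l)) C :
  frob (A *m B) C = frob A (C *m B^T).
Proof. by rewrite !frobE trmx_mul -mulmxA mxtrace_mulC mulmxA mxtrace_mulC. Qed.

Lemma frob_ge0 m k (A : 'M[R]_(m, k)) : 0 <= frob A A.
Proof. by apply: sumr_ge0 => i _; apply: sumr_ge0 => j _; exact: msq_ge0. Qed.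

Lemma frob_eq0 m k (A : 'M[R]_(m, k)) : frob A A = 0 -> A = 0.
Proof.
move=> /eqP; rewrite psumr_eq0; last by move=> i _; apply: sumr_ge0 => j _; exact: msq_ge0.
move=> /allP H; apply/matrixP => i j; rewrite mxE.
have /implyP := H i (mem_index_enum _) => /(_ isT) /eqP.
move=> /eqP; rewrite psumr_eq0; last by move=> j' _; exact: msq_ge0.
move=> /allP /(_ j (mem_index_enum _)) /implyP /(_ isT).
by rewrite mulf_eq0 orbb => /eqP.
Qed.

Lemma frob_CS m k (A B : 'M[R]_(m, k)) : frob A B ^+ 2 <= frob A A * frob B B.
Proof.
have [B0|Bn0] := eqVneq (frob B B) 0.
  by move: (frob_eq0 B0) => ->; rewrite !frob0r mulr0 expr0n.
have Bp : 0 < frob B B by rewrite lt_def Bn0 frob_ge0.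
have := frob_ge0 (frob B B *: A - frob A B *: B).
rewrite !(frobBl, frobBr, frobZl, frobZr) (frobC B A) => H.
have : 0 <= frob B B * (frob A A * frob B B - frob A B ^+ 2) by nra.
by rewrite pmulr_rge0 // subr_ge0.
Qed.

Lemma fnorm_ge0 m k (A : 'M[R]_(m, k)) : 0 <= fnorm A.
Proof. exact: sqrtr_ge0. Qed.

Lemma fnorm_sq m k (A : 'M[R]_(m, k)) : fnorm A ^+ 2 = frob A A.
Proof. by rewrite /fnorm sqr_sqrtr // frob_ge0. Qed.

Lemma frob_le m k (A B : 'M[R]_(m, k)) : `|frob A B| <= fnorm A * fnorm B.
Proof.
have h1 := frob_CS A B; rewrite -!fnorm_sq in h1.
have y0 : 0 <= fnorm A * fnorm B by rewrite mulr_ge0 ?fnorm_ge0.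
rewrite -exprMn in h1; move: y0 h1.
set y := fnorm A * fnorm B; set x := frob A B => y0 h1.
rewrite ler_norml; apply/andP; split; nra.
Qed.

Lemma frob_leR m k (A B : 'M[R]_(m, k)) : frob A B <= fnorm A * fnorm B.
Proof. exact: le_trans (ler_norm _) (frob_le A B). Qed.

Lemma frob_geR m k (A B : 'M[R]_(m, k)) : - (fnorm A * fnorm B) <= frob A B.
Proof. by have := frob_le A B; rewrite ler_norml => /andP[]. Qed.

Lemma frob_mul_le m k l (A : 'M[R]_(m, k)) (B : 'M[R]_(k, l)) :
  frob (A *m B) (A *m B) <= frob A A * frob B B.
Proof.
apply: (@le_trans _ _ (\sum_i \sum_j ((\sum_k0 A i k0 * A i k0) * (\sum_k0 B k0 j * B k0 j)))).
  apply: ler_sum => i _; apply: ler_sum => j _.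
  have := frob_CS (\row_k0 A i k0) (\row_k0 B k0 j).
  rewrite /frob !big_ord1 !mxE -expr2.
  have -> : \sum_(j0 < k) (\row_k0 A i k0) 0 j0 * (\row_k0 B k0 j) 0 j0 = \sum_k0 A i k0 * B k0 j.
    by apply: eq_bigr => k0 _; rewrite !mxE.
  have -> : \sum_(j0 < k) (\row_k0 A i k0) 0 j0 * (\row_k0 A i k0) 0 j0 = \sum_k0 A i k0 * A i k0.
    by apply: eq_bigr => k0 _; rewrite !mxE.
  have -> : \sum_(j0 < k) (\row_k0 B k0 j) 0 j0 * (\row_k0 B k0 j) 0 j0 = \sum_k0 B k0 j * B k0 j.
    by apply: eq_bigr => k0 _; rewrite !mxE.
  by [].
rewrite le_eqVlt; apply/orP; left; apply/eqP.
rewrite /frob mulr_suml; apply: eq_bigr => i _.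
rewrite -mulr_sumr; congr (_ * _).
by rewrite exchange_big.
Qed.

Lemma fnorm_mul_le m k l (A : 'M[R]_(m, k)) (B : 'M[R]_(k, l)) :
  fnorm (A *m B) <= fnorm A * fnorm B.
Proof.
rewrite /fnorm -sqrtrM ?frob_ge0 //; rewrite ler_sqrt ?mulr_ge0 ?frob_ge0 //.
exact: frob_mul_le.
Qed.

Lemma fnorm_mul_sq m k l (A : 'M[R]_(m, k)) (B : 'M[R]_(k, l)) :
  frob (A *m B) (A *m B) <= fnorm A ^+ 2 * fnorm B ^+ 2.
Proof. by rewrite !fnorm_sq; exact: frob_mul_le. Qed.

Lemma fnormZ m k a (A : 'M[R]_(m, k)) : fnorm (a *: A) = `|a| * fnorm A.
Proof.
rewrite /fnorm frobZl frobZr mulrA -expr2 sqrtrM ?sqr_ge0 //.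
by rewrite sqrtr_sqr.
Qed.

Lemma fnorm_tr m k (A : 'M[R]_(m, k)) : fnorm A^T = fnorm A.
Proof. by rewrite /fnorm frob_tr. Qed.

End FrobA.

Local Open Scope ring_scope.
Section FrobB.
Variable R : realType.

Lemma frob_sym_skew m (A B : 'M[R]_m) : A^T = A -> B^T = - B -> frob A B = 0.
Proof.
move=> hA hB; have := frob_tr A B; rewrite hA hB frobNr => h.
have : 2 * frob A B = 0 by rewrite mulr2n mulrDl mul1r -{1}h addNr.
by move/eqP; rewrite mulf_eq0 pnatr_eq0 /= => /eqP.
Qed.

Lemma msym_tr m (M : 'M[R]_m) : (msym M)^T = msym M.
Proof. by rewrite /msym linearZ linearD /= trmxK addrC. Qed.

Lemma mskew_tr m (M : 'M[R]_m) : (mskew M)^T = - mskew M.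
Proof. by rewrite /mskew linearZ linearB /= trmxK -scalerN opprB. Qed.

Lemma msym_skew m (M : 'M[R]_m) : msym M + mskew M = M.
Proof.
rewrite /msym /mskew -scalerDr addrACA subrr addr0.
have -> : M + M = 2%:R *: M by rewrite scaler_nat mulr2n.
by rewrite scalerA mulVf ?pnatr_eq0 // scale1r.
Qed.

Lemma frob_msym m (M K : 'M[R]_m) : K^T = K -> frob (msym M) K = frob M K.
Proof.
move=> hK; rewrite /msym frobZl frobDl.
have -> : frob M^T K = frob M K by rewrite -{1}hK frob_tr.
by field.
Qed.

Lemma sym_mul_tr m k (X : 'M[R]_(m, k)) (S : 'M[R]_k) : S^T = S -> (X *m S *m X^T)^T = X *m S *m X^T.
Proof. by move=> hS; rewrite !trmx_mul trmxK hS mulmxA. Qed.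

End FrobB.

Section Ident.
Variable R : realType.
Variables (n p : nat) (X G0 : 'M[R]_(n, p)).

Definition Dl := X^T *m X - 1%:M.
Definition Om := mskew (G0 *m X^T).
Definition Sm := msym (X^T *m G0).

Lemma Dl_sym : Dl^T = Dl.
Proof. by rewrite /Dl linearB /= trmx_mul trmxK tr_scalar_mx. Qed.

Lemma XtX : X^T *m X = Dl + 1%:M.
Proof. by rewrite /Dl subrK. Qed.

Lemma E1 : frob G0 (Om *m X) = frob Om Om.
Proof.
rewrite frobC frob_mulr -(msym_skew (G0 *m X^T)) frobDr.
by rewrite frobC frob_sym_skew ?add0r // ?msym_tr // mskew_tr.
Qed.

Lemma E2 : frob (X *m Sm) (Om *m X) = 0.
Proof.
rewrite frobC frob_mulr frobC.
by apply: frob_sym_skew; [apply: sym_mul_tr; exact: msym_tr | exact: mskew_tr].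
Qed.

Lemma E3 : frob (X *m Dl) (Om *m X) = 0.
Proof.
rewrite frobC frob_mulr frobC.
by apply: frob_sym_skew; [apply: sym_mul_tr; exact: Dl_sym | exact: mskew_tr].
Qed.

Lemma E4 : frob G0 (X *m Dl) - 2^-1 * frob (G0 *m Dl) (X *m Dl) - frob (X *m Sm) (X *m Dl)
  = - (3 / 2) * frob Sm (Dl *m Dl).
Proof.
have h1 : frob G0 (X *m Dl) = frob Sm Dl.
  by rewrite frobC frob_mull frobC /Sm frob_msym // Dl_sym.
have h2 : frob (G0 *m Dl) (X *m Dl) = frob Sm (Dl *m Dl).
  rewrite frobC frob_mull mulmxA frobC frob_mulr Dl_sym /Sm frob_msym //.
  by rewrite trmx_mul Dl_sym.
have h3 : frob (X *m Sm) (X *m Dl) = frob Sm (Dl *m Dl) + frob Sm Dl.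
  by rewrite frob_mull mulmxA XtX mulmxDl mul1mx frobDr.
rewrite h1 h2 h3; by field.
Qed.


Lemma b_bounds :
  (1 - fnorm Dl) * fnorm Dl ^+ 2 <= fnorm (X *m Dl) ^+ 2 /\
  fnorm (X *m Dl) ^+ 2 <= (1 + fnorm Dl) * fnorm Dl ^+ 2.
Proof.
have e : fnorm (X *m Dl) ^+ 2 = fnorm Dl ^+ 2 + frob Dl (Dl *m Dl).
  by rewrite !fnorm_sq frob_mull (mulmxA X^T X Dl) XtX mulmxDl mul1mx frobDr addrC.
have h := frob_le Dl (Dl *m Dl).
have h2 := fnorm_mul_le Dl Dl.
have d0 := fnorm_ge0 Dl.
have h3 : `|frob Dl (Dl *m Dl)| <= fnorm Dl * (fnorm Dl * fnorm Dl).
  by apply: le_trans h _; apply: ler_wpM2l.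
move: h3; rewrite ler_norml => /andP[h4 h5].
rewrite e; split; nra.
Qed.

Lemma a_bound : fnorm (Om *m X) ^+ 2 <= (1 + fnorm Dl) * frob Om Om.
Proof.
set a := fnorm (Om *m X).
set T := Om *m X *m X^T.
have e1 : a ^+ 2 = frob Om T by rewrite /a fnorm_sq frob_mulr.
have e2 : frob T T = a ^+ 2 + frob (Om *m X) (Om *m X *m Dl).
  rewrite /T frob_mulr trmxK -mulmxA XtX.
  by rewrite mulmxDr mulmx1 frobDr addrC /a fnorm_sq.
have h1 : frob (Om *m X) (Om *m X *m Dl) <= a * (a * fnorm Dl).
  apply: le_trans (frob_leR _ _) _; apply: ler_wpM2l; first exact: fnorm_ge0.
  exact: fnorm_mul_le.
have h2 : frob T T <= (1 + fnorm Dl) * a ^+ 2 by rewrite e2; nra.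
have h3 := frob_CS Om T.
rewrite -e1 in h3.
have a0 : 0 <= a := fnorm_ge0 _.
have o0 : 0 <= frob Om Om := frob_ge0 _.
have d0 := fnorm_ge0 Dl.
have [az|ap] := eqVneq a 0.
  by rewrite az expr0n /= mulr_ge0 // addr_ge0.
have ap' : 0 < a ^+ 2 by rewrite exprn_gt0 // lt_def ap a0.
have h4 : a ^+ 2 * a ^+ 2 <= a ^+ 2 * ((1 + fnorm Dl) * frob Om Om).
  have h5 : frob Om Om * frob T T <= frob Om Om * ((1 + fnorm Dl) * a ^+ 2) := ler_wpM2l o0 h2.
  have -> : a ^+ 2 * ((1 + fnorm Dl) * frob Om Om) = frob Om Om * ((1 + fnorm Dl) * a ^+ 2) by ring.
  by apply: le_trans h5; rewrite -expr2.
by rewrite -(ler_pM2l ap').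
Qed.

Lemma dform (H D : 'M[R]_(n, p)) (mu : R) :
  frob G0 H - 2^-1 * (frob (2^-1 *: ((H^T *m G0 + X^T *m D) + (H^T *m G0 + X^T *m D)^T))
                   (X^T *m X - 1%:M)
              + frob (msym (X^T *m G0)) ((H^T *m X + X^T *m H) - 0))
    + mu * (4^-1 * (frob ((H^T *m X + X^T *m H) - 0) (X^T *m X - 1%:M)
                    + frob (X^T *m X - 1%:M) ((H^T *m X + X^T *m H) - 0)))
  = frob G0 H - 2^-1 * frob (G0 *m Dl) H - 2^-1 * frob D (X *m Dl) - frob (X *m Sm) H
    + mu * frob (X *m Dl) H.
Proof.
have e1 := frob_msym (H^T *m G0 + X^T *m D) Dl_sym.
rewrite /msym in e1; rewrite -/Dl e1 frobDl.
have e2 : frob (H^T *m G0) Dl = frob (G0 *m Dl) H.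
  by rewrite frob_mull trmxK frob_mulr Dl_sym frobC.
have e3 : frob (X^T *m D) Dl = frob D (X *m Dl) by rewrite frob_mull trmxK.
have e4 : frob Sm (H^T *m X + X^T *m H - 0) = 2 * frob (X *m Sm) H.
  rewrite subr0 frobDr.
  have e5 : frob Sm (X^T *m H) = frob (X *m Sm) H by rewrite frobC frob_mull trmxK frobC.
  have e6 : frob Sm (H^T *m X) = frob Sm (X^T *m H).
    by rewrite -frob_tr /Sm msym_tr trmx_mul trmxK.
  by rewrite e6 e5 mulr2n mulrDl mul1r.
have e7 : frob (H^T *m X + X^T *m H - 0) Dl = 2 * frob (X *m Dl) H.
  rewrite subr0 frobDl.
  have e5 : frob (X^T *m H) Dl = frob (X *m Dl) H by rewrite frob_mull trmxK frobC.
  have e6 : frob (H^T *m X) Dl = frob (X^T *m H) Dl.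
    by rewrite -frob_tr Dl_sym trmx_mul trmxK.
  by rewrite e6 e5 mulr2n mulrDl mul1r.
rewrite -/Sm e2 e3 e4 e7 (frobC Dl) e7.
by field.
Qed.

Lemma frob_DE (H : 'M[R]_(n, p)) :
  frob (X^T *m X - 1%:M) (H^T *m X + X^T *m H) = 2 * frob (X *m Dl) H.
Proof.
rewrite -/Dl frobC frobDl.
have e5 : frob (X^T *m H) Dl = frob (X *m Dl) H by rewrite frob_mull trmxK frobC.
have e6 : frob (H^T *m X) Dl = frob (X^T *m H) Dl.
  by rewrite -frob_tr Dl_sym trmx_mul trmxK.
by rewrite e6 e5 mulr2n mulrDl mul1r.
Qed.
End Ident.

Local Open Scope ring_scope.
Section Scalar.
Variable R : realType.

Lemma young_step (e a w z Lh : R) : 0 <= e -> e < 1 -> 0 <= a -> 0 <= w ->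
  z ^+ 2 <= (1 + e) * w ^+ 2 ->
  (1 - e ^+ 2) * a * (w + z) <= (1 - e) ^+ 2 * a ^+ 2 + (1 + e) ^+ 3 * w ^+ 2.
Proof.
move=> e0 e1 a0 w0 hz.
have h1 : 2 * ((1 - e ^+ 2) * a * w) <= (1 - e) ^+ 2 * a ^+ 2 + (1 + e) ^+ 2 * w ^+ 2.
  have := sqr_ge0 ((1 - e) * a - (1 + e) * w); nra.
have h2 : 2 * ((1 - e ^+ 2) * a * z) <= (1 - e) ^+ 2 * a ^+ 2 + (1 + e) ^+ 2 * z ^+ 2.
  have := sqr_ge0 ((1 - e) * a - (1 + e) * z); nra.
have h3 : (1 + e) ^+ 2 * z ^+ 2 <= (1 + e) ^+ 3 * w ^+ 2.
  have : 0 <= (1 + e) ^+ 2 by rewrite sqr_ge0.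
  rewrite exprS. nra.
have h4 : (1 + e) ^+ 2 * w ^+ 2 <= (1 + e) ^+ 3 * w ^+ 2.
  have : 0 <= (1 + e) ^+ 2 * w ^+ 2 by rewrite mulr_ge0 ?sqr_ge0.
  rewrite exprS. nra.
nra.
Qed.


Lemma scalar_main (lam eps L L' s mu a b d g om2 x1 x2 x3 lamn : R) :
 0 < lam -> 0 < eps -> eps < 3/4 -> 0 < L ->
 0 <= a -> 0 <= b -> 0 <= d -> 0 <= g -> 0 <= lamn ->
 d <= eps -> g <= L' -> 0 <= s ->
 a ^+ 2 <= (1 + d) * om2 ->
 x1 <= a * g * d ->
 x2 <= s * d ^+ 2 ->
 x3 <= L * lamn * b ->
 lamn ^+ 2 = a ^+ 2 + lam ^+ 2 * b ^+ 2 ->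
 (1 - d) * d ^+ 2 <= b ^+ 2 -> b ^+ 2 <= (1 + d) * d ^+ 2 ->
 mu >= 2 / (3 - 4 * eps) *
        (L * (1 - eps) + 3 * s
         + (Num.max L L') ^+ 2 * ((1 + eps) ^+ 2 / (lam * (1 - eps)))) ->
 Num.min (1 / 2) (lam * mu / (4 * lam ^+ 2 * (1 + eps))) * lamn ^+ 2
   <= om2 - 2^-1 * x1 + lam * mu * b ^+ 2 - 3 / 2 * lam * x2 - 2^-1 * x3.
Proof.
move=> l0 e0 e34 L0 a0 b0 d0 g0 n0 de gL s0 hom hx1 hx2 hx3 hn hb1 hb2 hmu.
set Lh := Num.max L L'.
set rho := Num.min _ _.
have hLh : L <= Lh by rewrite /Lh le_max lexx.
have hgh : g <= Lh by rewrite /Lh le_max gL orbT.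
have e1 : eps < 1 by apply: lt_trans e34 _; lra.
have c0 : 0 < 3 - 4 * eps by lra.
set K := Lh ^+ 2 * ((1 + eps) ^+ 2 / (lam * (1 - eps))).
have le0 : 0 < lam * (1 - eps) by rewrite mulr_gt0 // subr_gt0.
have HK : K * (lam * (1 - eps)) = Lh ^+ 2 * (1 + eps) ^+ 2.
  by rewrite /K -mulrA divfK // gt_eqF.
have K0 : 0 <= K by rewrite /K mulr_ge0 ?sqr_ge0 // divr_ge0 ?sqr_ge0 // ltW.
have Hmu : 2 * (L * (1 - eps) + 3 * s + K) <= mu * (3 - 4 * eps).
  by move: hmu; rewrite mulrAC ler_pdivrMr.
have mu0 : 0 < mu.
  have : 0 < L * (1 - eps) by rewrite mulr_gt0 // subr_gt0.
  nra.
have r1 : rho <= 1 / 2 by rewrite /rho ge_min lexx.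
have r2 : rho <= lam * mu / (4 * lam ^+ 2 * (1 + eps)) by rewrite /rho ge_min lexx orbT.
have r0 : 0 <= rho.
  rewrite /rho le_min; apply/andP; split; first lra.
  rewrite divr_ge0 //; first by rewrite mulr_ge0 // ltW.
  by rewrite !mulr_ge0 ?sqr_ge0 //; lra.
have r3 : 4 * rho * lam * (1 + eps) <= mu.
  move: r2; rewrite ler_pdivlMr; last by rewrite !mulr_gt0 ?exprn_gt0 //; lra.
  move=> h; have : 4 * rho * lam * (1 + eps) * lam <= mu * lam by rewrite expr2 in h; nra.
  by rewrite ler_pM2r.
set m := mu - rho * lam - L / 2.
have hm : 3 / 2 * s + K / 2 <= (1 - eps) * m.
  have : (1 - eps) * (rho * lam) <= mu / 4.
    have : 0 <= rho * lam by rewrite mulr_ge0 // ltW.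
    nra.
  rewrite /m; nra.
have m0 : 0 <= m.
  have : 0 < 1 - eps by lra.
  nra.
have hl : K / 2 * d ^+ 2 <= b ^+ 2 * m - 3 / 2 * s * d ^+ 2.
  have : (1 - eps) * d ^+ 2 * m <= b ^+ 2 * m.
    apply: ler_wpM2r => //; apply: le_trans hb1; apply: ler_wpM2r; [exact: sqr_ge0| lra].
  have : 0 <= d ^+ 2 by exact: sqr_ge0.
  nra.
have hom2 : a ^+ 2 <= (1 + eps) * om2.
  have : 0 <= om2.
    have : 0 < 1 + d by lra.
    have := sqr_ge0 a. nra.
  nra.
have hbw : (Lh * b) ^+ 2 <= (1 + eps) * (Lh * d) ^+ 2.
  rewrite !exprMn; have : 0 <= Lh ^+ 2 by exact: sqr_ge0.
  have : b ^+ 2 <= (1 + eps) * d ^+ 2.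
    apply: le_trans hb2 _; apply: ler_wpM2r; [exact: sqr_ge0| lra].
  nra.
have Lh0 : 0 <= Lh by apply: le_trans g0 hgh.
have hy := young_step Lh (ltW e0) e1 a0 (mulr_ge0 Lh0 d0) hbw.
have hx3' : x3 <= L * a * b + lam * L * b ^+ 2.
  have : lamn <= a + lam * b.
    have h0 : 0 <= a + lam * b by rewrite addr_ge0 // mulr_ge0 // ltW.
    have h1 : 0 <= a * (lam * b) by rewrite !mulr_ge0 // ltW.
    have h2 : lamn ^+ 2 <= (a + lam * b) ^+ 2 by rewrite hn; nra.
    by move: h2; rewrite ler_sqr ?nnegrE.
  have : 0 <= L * b by rewrite mulr_ge0 // ltW.
  nra.
have hx1' : x1 <= a * Lh * d.
  apply: le_trans hx1 _; rewrite -!mulrA; apply: ler_wpM2l => //; apply: ler_wpM2r => //.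
have hab : L * a * b <= Lh * a * b.
  by apply: ler_wpM2r => //; apply: ler_wpM2r.
rewrite hn.
have hA : (1 - eps) ^+ 2 * a ^+ 2 - (1 - eps ^+ 2) * a * (Lh * d + Lh * b) + (1 + eps) ^+ 3 * (Lh * d) ^+ 2 >= 0.
  lra.
have hT : 2 * (1 + eps) * (1 - eps) * ((1 - eps) / (2 * (1 + eps)) * a ^+ 2 - 2^-1 * a * Lh * d - 2^-1 * Lh * a * b + K * lam / 2 * d ^+ 2) >= 0.
  have -> : 2 * (1 + eps) * (1 - eps) * ((1 - eps) / (2 * (1 + eps)) * a ^+ 2 - 2^-1 * a * Lh * d - 2^-1 * Lh * a * b + K * lam / 2 * d ^+ 2)
     = (1 - eps) ^+ 2 * a ^+ 2 - (1 - eps ^+ 2) * a * (Lh * d + Lh * b) + (1 + eps) * (K * (lam * (1 - eps))) * d ^+ 2.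
    by field; lra.
  by rewrite HK; move: hA; rewrite !exprMn -!mulrA; nra.
have hT' : 0 <= (1 - eps) / (2 * (1 + eps)) * a ^+ 2 - 2^-1 * a * Lh * d - 2^-1 * Lh * a * b + K * lam / 2 * d ^+ 2.
  have hc : 0 < 2 * (1 + eps) * (1 - eps) by rewrite !mulr_gt0 //; lra.
  by move: hT; rewrite pmulr_rge0.
have hom3 : (1 - eps) / (2 * (1 + eps)) * a ^+ 2 <= om2 - rho * a ^+ 2.
  have h0 : (1 + eps) * ((1 - eps) / (2 * (1 + eps)) * a ^+ 2) = (1 - eps) / 2 * a ^+ 2 by field; lra.
  have h1 : rho * a ^+ 2 <= 1 / 2 * a ^+ 2 by apply: ler_wpM2r => //; exact: sqr_ge0.
  have h1' : (1 + eps) * (rho * a ^+ 2) <= (1 + eps) * (1 / 2 * a ^+ 2) by apply: ler_wpM2l => //; lra.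
  rewrite -(@ler_pM2l _ (1 + eps)); last lra.
  rewrite h0; lra.
have hx2' : lam * x2 <= lam * (s * d ^+ 2) by rewrite ler_wpM2l // ltW.
have hlm : lam * (K / 2 * d ^+ 2) <= lam * (b ^+ 2 * m - 3 / 2 * s * d ^+ 2) by rewrite ler_wpM2l // ltW.
rewrite /m in hlm.
have : K * lam / 2 * d ^+ 2 = lam * (K / 2 * d ^+ 2) by field.
lra.
Qed.
End Scalar.

Local Open Scope ring_scope.
Local Open Scope classical_set_scope.
Local Open Scope ring_scope.
Section Der.
Variable R : realType.
Variables (n p : nat).
Local Notation V := ('M[R]_(n, p)).

Definition mder {a b : nat} (F : V -> 'M[R]_(a, b)) (X v : V) (D : 'M[R]_(a, b)) :=
  forall i j, derivable (fun Y => F Y i j) X v /\ 'D_v (fun Y => F Y i j) X = D i j.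

Lemma mder_of {a b : nat} (F : V -> 'M[R]_(a, b)) X v :
  derivable F X v -> mder F X v ('D_v F X).
Proof.
move=> dF i j.
have hc : (fun h : R => h^-1 *: (((fun Y => F Y i j) \o shift X) (h *: v) - (fun Y => F Y i j) X))
   = (fun M : 'M[R]_(a, b) => M i j) \o (fun h : R => h^-1 *: ((F \o shift X) (h *: v) - F X)).
  by rewrite funeqE => h /=; rewrite !mxE.
have cv : (fun h : R => h^-1 *: ((F \o shift X) (h *: v) - F X)) @ 0^' --> 'D_v F X.
  exact: dF.
have cv2 : ((fun M : 'M[R]_(a, b) => M i j) \o (fun h : R => h^-1 *: ((F \o shift X) (h *: v) - F X))) @ 0^' --> 'D_v F X i j.
  apply: cvg_comp cv _; exact: coord_continuous.
split.
  by rewrite /derivable hc; apply/cvg_ex; eexists; exact: cv2.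
by rewrite /derive hc; apply: cvg_lim.
Qed.


Lemma mder_id X v : mder (fun Y : V => Y) X v v.
Proof.
have := @mder_of _ _ (fun Y : V => Y) X v (@derivable_id _ V X v).
by rewrite derive_id.
Qed.

Lemma mder_cst {a b : nat} (C : 'M[R]_(a, b)) X v : mder (fun _ : V => C) X v 0.
Proof.
move=> i j; rewrite mxE; split; first exact: derivable_cst.
exact: derive_cst.
Qed.

Lemma mder_add {a b : nat} (F H : V -> 'M[R]_(a, b)) X v DF DH :
  mder F X v DF -> mder H X v DH -> mder (fun Y => F Y + H Y) X v (DF + DH).
Proof.
move=> hF hH i j; have [dF eF] := hF i j; have [dH eH] := hH i j.
have -> : (fun Y => (F Y + H Y) i j) = (fun Y => F Y i j) + (fun Y => H Y i j).
  by rewrite funeqE => Y; rewrite mxE.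
by rewrite mxE; split; [exact: derivableD | rewrite deriveD // eF eH].
Qed.

Lemma mder_opp {a b : nat} (F : V -> 'M[R]_(a, b)) X v DF :
  mder F X v DF -> mder (fun Y => - F Y) X v (- DF).
Proof.
move=> hF i j; have [dF eF] := hF i j.
have -> : (fun Y => (- F Y) i j) = - (fun Y => F Y i j).
  by rewrite funeqE => Y; rewrite mxE.
by rewrite mxE; split; [exact: derivableN | rewrite deriveN // eF].
Qed.

Lemma mder_sub {a b : nat} (F H : V -> 'M[R]_(a, b)) X v DF DH :
  mder F X v DF -> mder H X v DH -> mder (fun Y => F Y - H Y) X v (DF - DH).
Proof. by move=> hF hH; apply: mder_add => //; exact: mder_opp. Qed.

Lemma mder_scale {a b : nat} (c : R) (F : V -> 'M[R]_(a, b)) X v DF :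
  mder F X v DF -> mder (fun Y => c *: F Y) X v (c *: DF).
Proof.
move=> hF i j; have [dF eF] := hF i j.
have -> : (fun Y => (c *: F Y) i j) = c *: (fun Y => F Y i j).
  by rewrite funeqE => Y; rewrite !mxE.
by rewrite mxE; split; [exact: derivableZ | rewrite deriveZ // eF].
Qed.

Lemma mder_tr {a b : nat} (F : V -> 'M[R]_(a, b)) X v DF :
  mder F X v DF -> mder (fun Y => (F Y)^T) X v DF^T.
Proof.
move=> hF i j; have [dF eF] := hF j i.
have -> : (fun Y => (F Y)^T i j) = (fun Y => F Y j i).
  by rewrite funeqE => Y; rewrite mxE.
by rewrite mxE.
Qed.

Lemma der_prod (f g : V -> R) X v df dg :
  derivable f X v -> 'D_v f X = df -> derivable g X v -> 'D_v g X = dg ->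
  derivable (fun Y => f Y * g Y) X v /\ 'D_v (fun Y => f Y * g Y) X = df * g X + f X * dg.
Proof.
move=> hf ef hg eg.
have -> : (fun Y => f Y * g Y) = f * g by [].
split; first exact: derivableM.
by rewrite deriveM // ef eg /GRing.scale /= addrC mulrC.
Qed.

Lemma der_sum (k : nat) (h : 'I_k -> V -> R) X v dh :
  (forall i, derivable (h i) X v /\ 'D_v (h i) X = dh i) ->
  derivable (fun Y => \sum_(i < k) h i Y) X v /\ 'D_v (fun Y => \sum_(i < k) h i Y) X = \sum_(i < k) dh i.
Proof.
move=> H.
have -> : (fun Y => \sum_(i < k) h i Y) = \sum_(i < k) h i.
  by rewrite funeqE => Y; rewrite fct_sumE.
split; first by apply: derivable_sum => i; case: (H i).
by rewrite derive_sum; [apply: eq_bigr => i _; case: (H i) | move=> i; case: (H i)].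
Qed.

Lemma mder_mul {a b c : nat} (F : V -> 'M[R]_(a, b)) (H : V -> 'M[R]_(b, c)) X v DF DH :
  mder F X v DF -> mder H X v DH -> mder (fun Y => F Y *m H Y) X v (DF *m H X + F X *m DH).
Proof.
move=> hF hH i j.
have -> : (fun Y => (F Y *m H Y) i j) = (fun Y => \sum_(k < b) (fun k Y => F Y i k * H Y k j) k Y).
  by rewrite funeqE => Y; rewrite mxE.
have [d e] := der_sum (fun k => der_prod (proj1 (hF i k)) (proj2 (hF i k)) (proj1 (hH k j)) (proj2 (hH k j))).
split; first exact: d. by rewrite e !mxE -big_split.
Qed.

Lemma frob_der {a b : nat} (F H : V -> 'M[R]_(a, b)) X v DF DH :
  mder F X v DF -> mder H X v DH ->
  derivable (fun Y => frob (F Y) (H Y)) X v /\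
  'D_v (fun Y => frob (F Y) (H Y)) X = frob DF (H X) + frob (F X) DH.
Proof.
move=> hF hH.
have [d e] := der_sum (fun i => der_sum (fun j => der_prod (proj1 (hF i j)) (proj2 (hF i j)) (proj1 (hH i j)) (proj2 (hH i j)))).
split => //; rewrite /frob e -big_split /=; apply: eq_bigr => i _; by rewrite -big_split.
Qed.

Lemma der_cmul (c : R) (g : V -> R) X v dg :
  derivable g X v -> 'D_v g X = dg ->
  derivable (fun Y => c * g Y) X v /\ 'D_v (fun Y => c * g Y) X = c * dg.
Proof.
move=> hg eg.
have [d e] := der_prod (derivable_cst c X v) (derive_cst c X v) hg eg.
by split => //; rewrite e mul0r add0r.
Qed.

Lemma calL_der (f : V -> R) (G : V -> V) mu X v :
  derivable f X v -> derivable G X v ->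
  'D_v (calL f G mu) X = 'D_v f X
    - 2^-1 * (frob (2^-1 *: ((v^T *m G X + X^T *m 'D_v G X) + (v^T *m G X + X^T *m 'D_v G X)^T))
                   (X^T *m X - 1%:M)
              + frob (msym (X^T *m G X)) ((v^T *m X + X^T *m v) - 0))
    + mu * (4^-1 * (frob ((v^T *m X + X^T *m v) - 0) (X^T *m X - 1%:M)
                    + frob (X^T *m X - 1%:M) ((v^T *m X + X^T *m v) - 0))).
Proof.
move=> df dG.
have hT : mder (fun Y : V => Y^T) X v v^T := mder_tr (mder_id X v).
have hM : mder (fun Y : V => Y^T *m G Y) X v (v^T *m G X + X^T *m 'D_v G X) :=
  mder_mul hT (mder_of dG).
have hS : mder (fun Y : V => msym (Y^T *m G Y)) X v
   (2^-1 *: ((v^T *m G X + X^T *m 'D_v G X) + (v^T *m G X + X^T *m 'D_v G X)^T)) :=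
  mder_scale _ (mder_add hM (mder_tr hM)).
have hD : mder (fun Y : V => Y^T *m Y - 1%:M) X v ((v^T *m X + X^T *m v) - 0) :=
  mder_sub (mder_mul hT (mder_id X v)) (mder_cst _ X v).
have [d1 e1] := frob_der hS hD.
have [d2 e2] := frob_der hD hD.
have [d1' e1'] := der_cmul (2^-1) d1 e1.
have [d2' e2'] := der_cmul (4^-1) d2 e2.
have [d2'' e2''] := der_cmul mu d2' e2'.
have -> : calL f G mu = f - (fun Y => 2^-1 * frob (msym (Y^T *m G Y)) (Y^T *m Y - 1%:M))
   + (fun Y => mu * (4^-1 * frob (Y^T *m Y - 1%:M) (Y^T *m Y - 1%:M))).
  by rewrite funeqE => Y; rewrite /calL /Npen fnorm_sq.
rewrite deriveD //; last by apply: derivableB.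
by rewrite deriveB // e1' e2''.
Qed.

Lemma lip_dir (G : V -> V) X v (N : V) L :
  derivable G X v ->
  (\forall h \near (0:R)^'-, fnorm (G (h *: v + X) - G X) <= L * fnorm (h *: v)) ->
  frob ('D_v G X) N <= L * fnorm v * fnorm N.
Proof.
move=> dG hnear.
have [dphi ephi] := frob_der (mder_of dG) (mder_cst N X v).
rewrite frob0r addr0 in ephi; rewrite -ephi.
set q := (fun h : R => h^-1 *: (((fun Y => frob (G Y) N) \o shift X) (h *: v) - frob (G X) N)).
have cv : q @ (0:R)^' --> 'D_v (fun Y => frob (G Y) N) X by exact: dphi.
have cv' : q @ (0:R)^'- --> 'D_v (fun Y => frob (G Y) N) X.
  apply: cvg_trans cv; apply: cvg_app; apply: within_subset => x /= hx.
  by rewrite lt_eqF.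
apply: (cvgr_to_le cv').
near=> h.
have hn : h < 0 by near: h; exact: nbhs_left_lt.
have hl : fnorm (G (h *: v + X) - G X) <= L * fnorm (h *: v) by near: h; exact: hnear.
rewrite /q /= [X in X <= _]/GRing.scale /= -frobBl -frobZl.
apply: le_trans (frob_leR _ _) _.
rewrite fnormZ fnormZ in hl *.
apply: ler_wpM2r; first exact: fnorm_ge0.
have h0 : 0 < `|h^-1| by rewrite normr_gt0 invr_eq0 lt_eqF.
rewrite -(@ler_pM2l _ `|h|); last by rewrite normr_gt0 lt_eqF.
rewrite mulrA -normrM mulfV ?lt_eqF // normr1 mul1r.
by apply: le_trans hl _; rewrite mulrCA.
Unshelve. all: by end_near.
Qed.
End Der.

Local Open Scope ring_scope.
Local Open Scope classical_set_scope.
Local Open Scope ring_scope.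
Section Left.
Variable R : realType.
Variables (n p : nat).
Local Notation V := ('M[R]_(n, p)).

Lemma expand_D (X L : V) (h : R) :
  (h *: L + X)^T *m (h *: L + X) - 1%:M
  = (X^T *m X - 1%:M) + (h *: (L^T *m X + X^T *m L) + h ^+ 2 *: (L^T *m L)).
Proof.
apply/matrixP => i j; rewrite !mxE.
rewrite !mulr_sumr -!big_split /=.
have -> : \sum_j0 (h *: L + X)^T i j0 * (h *: L + X) j0 j
   = \sum_j0 (X^T i j0 * X j0 j + (h * (L^T i j0 * X j0 j) + h * (X^T i j0 * L j0 j) + h ^+ 2 * (L^T i j0 * L j0 j))).
  by apply: eq_bigr => k _; rewrite !mxE; ring.
rewrite [RHS]addrAC; congr (_ - _).
rewrite mulr_sumr -!big_split /=.
by apply: eq_bigr => k _; ring.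
Qed.

Lemma poly_neg (c1 c2 c3 c4 t : R) : 0 < c1 -> 0 < t -> t <= 1 ->
  t * (`|c2| + `|c3| + `|c4|) <= c1 ->
  - 2 * t * c1 + t ^+ 2 * c2 - t ^+ 3 * c3 + t ^+ 4 * c4 <= 0.
Proof.
move=> c1p t0 t1 htK.
have a2 : c2 <= `|c2| := ler_norm c2.
have a3 : - c3 <= `|c3| by rewrite -normrN ler_norm.
have a4 : c4 <= `|c4| := ler_norm c4.
have n2 := normr_ge0 c2; have n3 := normr_ge0 c3; have n4 := normr_ge0 c4.
have t2 : 0 <= t ^+ 2 by exact: sqr_ge0.
have e2 : t ^+ 2 * c2 <= t ^+ 2 * `|c2| by exact: ler_wpM2l.
have e3 : t ^+ 3 * (- c3) <= t ^+ 2 * `|c3|.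
  apply: le_trans (_ : t ^+ 3 * `|c3| <= _).
    by apply: ler_wpM2l => //; rewrite exprn_ge0 // ltW.
  apply: ler_wpM2r => //; rewrite exprS.
  have : t * t ^+ 2 <= 1 * t ^+ 2 by apply: ler_wpM2r.
  by rewrite mul1r.
have e4 : t ^+ 4 * c4 <= t ^+ 2 * `|c4|.
  apply: le_trans (_ : t ^+ 4 * `|c4| <= _).
    by apply: ler_wpM2l => //; rewrite exprn_ge0 // ltW.
  apply: ler_wpM2r => //.
  have -> : t ^+ 4 = t ^+ 2 * t ^+ 2 by rewrite -exprD.
  have : t ^+ 2 <= 1 by rewrite expr_le1 // ltW.
  nra.
have : t ^+ 2 * (`|c2| + `|c3| + `|c4|) <= t * c1.
  rewrite expr2 -mulrA; apply: ler_wpM2l => //; exact: ltW.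
have : 0 < t * c1 by exact: mulr_gt0.
nra.
Qed.

Lemma frob_quad (D E F : 'M[R]_p) h :
  frob (D + (h *: E + h ^+ 2 *: F)) (D + (h *: E + h ^+ 2 *: F))
   = frob D D + (2 * h * frob D E + h ^+ 2 * (frob E E + 2 * frob D F) + h ^+ 3 * (2 * frob E F) + h ^+ 4 * frob F F).
Proof.
rewrite !(frobDl, frobDr, frobZl, frobZr) (frobC E D) (frobC F D) (frobC F E).
ring.
Qed.

Lemma left_in (X L : V) eps : StEps eps X ->
  0 < frob (X^T *m X - 1%:M) (L^T *m X + X^T *m L) ->
  \forall h \near (0:R)^'-, StEps eps (h *: L + X).
Proof.
move=> hX c1p.
set D := X^T *m X - 1%:M in hX c1p *; set E := L^T *m X + X^T *m L in c1p *.
set F := L^T *m L.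
set c1 := frob D E.
have c1p0 : 0 < c1 by [].
clear c1p.
set c2 := frob E E + 2 * frob D F; set c3 := 2 * frob E F; set c4 := frob F F.
have key : forall h, frob (D + (h *: E + h ^+ 2 *: F)) (D + (h *: E + h ^+ 2 *: F))
   = frob D D + (2 * h * c1 + h ^+ 2 * c2 + h ^+ 3 * c3 + h ^+ 4 * c4).
  by move=> h; rewrite frob_quad.
set K := `|c2| + `|c3| + `|c4|.
have K1 : 0 < K + 1 by rewrite /K ltr_wpDl // ?addr_ge0 ?normr_ge0.
set dl := Num.min 1 (c1 / (K + 1)).
have dl0 : 0 < dl by rewrite /dl lt_min ltr01 divr_gt0.
near=> h.
have hn : h < 0 by near: h; exact: nbhs_left_lt.
have hd : - dl < h by near: h; apply: nbhs_left_gt; rewrite oppr_lt0.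
rewrite /StEps expand_D -/D -/E -/F.
apply: le_trans hX; rewrite /fnorm ler_sqrt ?frob_ge0 // key gerDl.
have dl1 : dl <= 1 by rewrite /dl ge_min lexx.
have dl2 : dl <= c1 / (K + 1) by rewrite /dl ge_min lexx orbT.
have t1 : - h <= 1 by apply: le_trans _ dl1; rewrite lerNl; exact: ltW.
have t2 : - h * (K + 1) <= c1.
  by rewrite -ler_pdivlMr //; apply: le_trans _ dl2; rewrite lerNl; exact: ltW.
have t3 : - h * K <= c1.
  apply: le_trans t2; apply: ler_wpM2l; first by rewrite oppr_ge0 ltW.
  by rewrite lerDl.
have ht : 0 < - h by rewrite oppr_gt0.
have := poly_neg c1p0 ht t1 t3.
have -> : (- h) ^+ 2 = h ^+ 2 by rewrite sqrrN.
have -> : (- h) ^+ 3 = - h ^+ 3 by ring.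
have -> : (- h) ^+ 4 = h ^+ 4 by ring.
lra.
Unshelve. all: by end_near.
Qed.
End Left.

Unset Implicit Arguments.
Local Open Scope classical_set_scope.
Local Open Scope ring_scope.

Theorem proposition7 (R : realType) (n p : nat)
  (lam eps L L' s mu : R)
  (f : 'M[R]_(n, p) -> R) (G : 'M[R]_(n, p) -> 'M[R]_(n, p))
  (GL : 'M[R]_(n, p) -> 'M[R]_(n, p)) :
  (1 <= p)%N -> (p <= n)%N ->
  0 < lam -> 0 < eps -> eps < 3 / 4 ->
  is_grad f G ->
  (forall X, differentiable G X) ->
  (forall H, continuous (fun X => 'D_H G X)) ->
  0 < L ->
  (forall X Y, StEps eps X -> StEps eps Y -> fnorm (G X - G Y) <= L * fnorm (X - Y)) ->
  (exists2 X0, StEps eps X0 & fnorm (G X0) = L') ->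
  (forall X, StEps eps X -> fnorm (G X) <= L') ->
  (forall X, StEps eps X -> fnorm (msym (X^T *m G X)) <= s) ->
  (forall s', (forall X, StEps eps X -> fnorm (msym (X^T *m G X)) <= s') -> s <= s') ->
  mu >= 2 / (3 - 4 * eps) *
        (L * (1 - eps) + 3 * s
         + (Num.max L L') ^+ 2 * ((1 + eps) ^+ 2 / (lam * (1 - eps)))) ->
  is_grad (calL f G mu) GL ->
  let nu := lam * mu in
  let rho := Num.min (1 / 2) (nu / (4 * lam ^+ 2 * (1 + eps))) in
  forall X, StEps eps X ->
    frob (LambdaF G lam X) (GL X) >= rho * fnorm (LambdaF G lam X) ^+ 2.
Proof.
move=> p1 pn lam0 e0 e34 hf hGd hGc L0 hLip _ hL' hs _ hmu hcal nu rho X hX.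
set G0 := G X.
set psi := Om X G0 *m X.
set N := X *m Dl X.
have eLam : LambdaF G lam X = psi + lam *: N by [].
set Lam := LambdaF G lam X.
have [_ hgl] := hcal X.
have [dfX hfD] := hf X.
have dG : derivable G X Lam by apply: diff_derivable.
have df : derivable f X Lam by apply: diff_derivable.
set D := 'D_Lam G X.
have eQ : frob Lam (GL X) = frob G0 Lam - 2^-1 * frob (G0 *m Dl X) Lam - 2^-1 * frob D N
    - frob (X *m Sm X G0) Lam + mu * frob N Lam.
  by rewrite frobC -hgl calL_der // hfD (dform X G0 Lam D mu).
have E1' := E1 X G0. have E2' := E2 X G0. have E3' := E3 X G0. have E4' := E4 X G0.
rewrite -/psi in E1' E2' E3'. rewrite -/N in E3' E4'.
set om2 := frob (Om X G0) (Om X G0) in E1'.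
set a := fnorm psi. set b := fnorm N. set d := fnorm (Dl X). set g := fnorm G0.
set x1 := frob (G0 *m Dl X) psi.
set x2 := frob (Sm X G0) (Dl X *m Dl X).
set x3 := frob D N.
set lamn := fnorm Lam.
have eNpsi : frob N psi = 0 by exact: E3'.
have eQ' : frob Lam (GL X) = om2 - 2^-1 * x1 + lam * mu * b ^+ 2 - 3 / 2 * lam * x2 - 2^-1 * x3.
  rewrite eQ /Lam eLam !(frobDr, frobZr) E1' E2' eNpsi /b fnorm_sq.
  have : frob G0 N - 2^-1 * frob (G0 *m Dl X) N - frob (X *m Sm X G0) N = - (3 / 2) * x2 by exact: E4'.
  rewrite -/x1 -/x3 -/x2.
  move=> h4.
  have h4' : frob G0 N = - (3 / 2) * x2 + 2^-1 * frob (G0 *m Dl X) N + frob (X *m Sm X G0) N.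
    by rewrite -h4; ring.
  rewrite h4'; ring.
rewrite eQ' /rho /nu.
have hd : d <= eps by [].
have hg : g <= L' by exact: hL'.
have hSm : fnorm (Sm X G0) <= s by exact: hs.
have s0 : 0 <= s by apply: le_trans hSm; exact: fnorm_ge0.
have ha : a ^+ 2 <= (1 + d) * om2 by exact: a_bound.
have hx1 : x1 <= a * g * d.
  apply: le_trans (frob_leR _ _) _.
  have hm := fnorm_mul_le G0 (Dl X).
  apply: le_trans (ler_wpM2r (fnorm_ge0 psi) hm) _.
  by rewrite -/a -/g -/d le_eqVlt; apply/orP; left; apply/eqP; ring.
have hx2 : x2 <= s * d ^+ 2.
  apply: le_trans (frob_leR _ _) _.
  have hm := fnorm_mul_le (Dl X) (Dl X).
  apply: le_trans (ler_wpM2l (fnorm_ge0 (Sm X G0)) hm) _.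
  by rewrite -/d expr2; apply: ler_wpM2r => //; rewrite mulr_ge0 // fnorm_ge0.
have hn : lamn ^+ 2 = a ^+ 2 + lam ^+ 2 * b ^+ 2.
  rewrite /lamn /a /b !fnorm_sq /Lam eLam !(frobDl, frobDr, frobZl, frobZr) eNpsi (frobC psi N) eNpsi.
  ring.
have [hb1 hb2] := b_bounds X.
have hx3 : x3 <= L * lamn * b.
  have [N0|Np] := eqVneq (frob N N) 0.
    have N0' := frob_eq0 N0.
    rewrite /x3 /b N0' frob0r /fnorm frob0r sqrtr0 mulr0 //.
  have Np' : 0 < frob N N by rewrite lt_def Np frob_ge0.
  have pos : 0 < frob (X^T *m X - 1%:M) (Lam^T *m X + X^T *m Lam).
    rewrite frob_DE -/N /Lam eLam frobDr frobZr eNpsi add0r.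
    by rewrite !mulr_gt0.
  have near := left_in hX pos.
  rewrite /x3 /D /lamn /b; apply: (@lip_dir R n p G X Lam N L dG).
  apply: filterS near => h hh.
  by have := hLip _ _ hh hX; rewrite addrK.
exact: (scalar_main lam0 e0 e34 L0 (fnorm_ge0 _) (fnorm_ge0 _) (fnorm_ge0 _) (fnorm_ge0 _) (fnorm_ge0 _)
   hd hg s0 ha hx1 hx2 hx3 hn hb1 hb2 hmu).
Qed.
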